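(* In the matching game defined by a market $\mathbf{M}=(\mathbf{P},\mathbf{A},\mathbf{O})$, for every pure-strategy Nash equilibrium $a$ the match $\mu(a)$ is stable, and every stable match equals $\mu(a)$ for some pure-strategy Nash equilibrium $a$. Moreover, any action profile $a$ with $\mu(a)=\mu^*$ (the proposer-optimal stable match) is a pure Nash equilibrium that maximizes the welfare $\sum_{i=1}^n u_i(a)$ among all pure Nash equilibria.
   Context: Market: proposers $\mathbf{P}=\{P_1,\dots,P_n\}$ and disjoint acceptors $\mathbf{A}=\{A_1,\dots,A_m\}$. Each proposer $P_i$ has an injective function $O_{P_i}:\mathbf{A}\cup\{\emptyset\}\to[0,1]$ with $O_{P_i}(A_j)>O_{P_i}(\emptyset)=0$; each acceptor $A_j$ has an injective $O_{A_j}:\mathbf{P}\cup\{\emptyset\}\to[0,1]$ with $O_{A_j}(P_i)>O_{A_j}(\emptyset)=0$. Game: the players are the proposers; each $P_i$ chooses $a_i\in\mathbf{A}\cup\{\emptyset\}$. Each acceptor $A_j$ accepts its $O_{A_j}$-most preferred proposer among $\{P_i:a_i=A_j\}$ (if nonempty), rejecting the others, giving a match $\mu(a)$ with $\mu_{P_i}(a)$ the acceptor that accepted $P_i$ (or $\emptyset$) and $\mu_{A_j}(a)$ the proposer accepted by $A_j$ (or $\emptyset$). Utility $u_i(a)=O_{P_i}(\mu_{P_i}(a))$. A match $\mu$ is unstable if some pair $(P_i,A_j)$ has $O_{P_i}(A_j)>O_{P_i}(\mu_{P_i})$ and $O_{A_j}(P_i)>O_{A_j}(\mu_{A_j})$,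 and stable otherwise. The proposer-optimal stable match $\mu^*$ is the stable match such that $O_{P_i}(\mu^*_{P_i})\ge O_{P_i}(\mu'_{P_i})$ for every stable $\mu'$ and every $i$. *)

(* Defs.v *)
From HB Require Import structures.
From mathcomp Require Import all_boot all_order all_algebra.
From mathcomp Require Import reals.
Set Implicit Arguments. Unset Strict Implicit. Unset Printing Implicit Defensive.
Import Order.TTheory GRing.Theory Num.Theory.
Local Open Scope ring_scope.

(* Proposers are 'I_n, acceptors are 'I_m; [None] stands for the empty choice ∅. *)

Section Market.
Variables (R : realType) (n m : nat).
Variables (OP : 'I_n -> option 'I_m -> R) (OA : 'I_m -> option 'I_n -> R).

Definition market_ok : Prop :=
  (forall i, injective (OP i)) /\ (forall i, OP i None = 0) /\
  (forall i j, 0 < OP i (Some j)) /\ (forall i x, 0 <= OP i x <= 1) /\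
  (forall j, injective (OA j)) /\ (forall j, OA j None = 0) /\
  (forall j i, 0 < OA j (Some i)) /\ (forall j x, 0 <= OA j x <= 1).

Definition profile := 'I_n -> option 'I_m.

Definition accepted (a : profile) (j : 'I_m) : option 'I_n :=
  [pick i | (a i == Some j) &&
     [forall k, (a k == Some j) ==> (OA j (Some k) <= OA j (Some i))]].

Definition muP (a : profile) (i : 'I_n) : option 'I_m :=
  if a i is Some j then (if accepted a j == Some i then Some j else None) else None.

Definition util (a : profile) (i : 'I_n) : R := OP i (muP a i).

Definition deviate (a : profile) (i : 'I_n) (b : option 'I_m) : profile :=
  fun k => if k == i then b else a k.

Definition nash (a : profile) : Prop :=
  forall i b, util (deviate a i b) i <= util a i.

Definition welfare (a : profile) : R := \sum_(i < n) util a i.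

(* A match, given by its proposer side mu i = μ_{P_i} (each acceptor matched to
   at most one proposer); the acceptor side is derived. *)
Definition is_match (mu : 'I_n -> option 'I_m) : Prop :=
  forall i i' j, mu i = Some j -> mu i' = Some j -> i = i'.

Definition muA (mu : 'I_n -> option 'I_m) (j : 'I_m) : option 'I_n :=
  [pick i | mu i == Some j].

Definition stable (mu : 'I_n -> option 'I_m) : Prop :=
  is_match mu /\
  ~ (exists i j, OP i (mu i) < OP i (Some j) /\ OA j (muA mu j) < OA j (Some i)).

Definition proposer_optimal (mu : 'I_n -> option 'I_m) : Prop :=
  stable mu /\ forall mu', stable mu' -> forall i, OP i (mu' i) <= OP i (mu i).

End Market.

(* Main.v *)
Require Import Defs.
From mathcomp Require Import all_boot all_order all_algebra.
From mathcomp Require Import reals.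
From Stdlib Require Import FunctionalExtensionality.
Import Order.TTheory GRing.Theory Num.Theory.
Local Open Scope ring_scope.

Lemma exmax (R : realType) (T : finType) (P : pred T) (f : T -> R) x0 :
  P x0 -> exists x, P x /\ forall y, P y -> f y <= f x.
Proof.
move=> Px0.
suff H : forall s : seq T, (exists2 x, x \in s & P x) ->
  exists x, P x /\ forall y, y \in s -> P y -> f y <= f x.
  have [x [Px Hx]] := H (enum T) (ex_intro2 _ _ x0 (mem_enum _ x0) Px0).
  by exists x; split=> // y Py; apply: Hx => //; rewrite mem_enum.
elim=> [|z s IH] [x]; first by [].
case: (boolP (has P s)) => [/hasP [w ws Pw] _ _ | hn].
  have [x' [Px' Hx']] := IH (ex_intro2 _ _ w ws Pw).
  case: (leP (f z) (f x')) => hz.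
    exists x'; split=> // y; rewrite in_cons => /orP [/eqP -> //|ys Py].
    exact: Hx'.
  case: (boolP (P z)) => Pz.
    exists z; split=> // y; rewrite in_cons => /orP [/eqP -> //|ys Py].
    by apply: le_trans (Hx' y ys Py) (ltW hz).
  exists x'; split=> // y; rewrite in_cons => /orP [/eqP -> Py|ys Py].
    by rewrite Py in Pz.
  exact: Hx'.
rewrite in_cons => /orP [/eqP ->|xs] Px.
  exists z; split=> // y; rewrite in_cons => /orP [/eqP -> //|ys Py].
  by move/hasPn: hn => /(_ y ys); rewrite Py.
by move/hasPn: hn => /(_ x xs); rewrite Px.
Qed.

Lemma accepted_spec (R : realType) n m (OA : 'I_m -> option 'I_n -> R) a j i :
  accepted OA a j = Some i ->
  a i = Some j /\ forall k, a k = Some j -> OA j (Some k) <= OA j (Some i).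
Proof.
rewrite /accepted; case: pickP => [x /andP [/eqP Hx /forallP Hf]|//] [<-].
split=> // k Hk; move: (Hf k); rewrite Hk eqxx; exact.
Qed.

Lemma accepted_ex (R : realType) n m (OA : 'I_m -> option 'I_n -> R) (a : profile n m) j k :
  a k = Some j -> exists i, accepted OA a j = Some i.
Proof.
move=> Hk.
have [x [/eqP Px Hx]] := @exmax R _ (fun i => a i == Some j) (fun i => OA j (Some i))
   k (introT eqP Hk).
rewrite /accepted; case: pickP => [y _|Hn]; first by exists y.
move: (Hn x); rewrite Px eqxx /=; move/negP; case.
by apply/forallP => z; apply/implyP => Hz; apply: Hx.
Qed.

Lemma muP_some (R : realType) n m (OA : 'I_m -> option 'I_n -> R) a k j :
  muP OA a k = Some j -> a k = Some j /\ accepted OA a j = Some k.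
Proof.
rewrite /muP; case: (a k) => [j'|//].
by case: eqP => // H [<-].
Qed.

Lemma muA_some n m (mu : 'I_n -> option 'I_m) j k :
  muA mu j = Some k -> mu k = Some j.
Proof. by rewrite /muA; case: pickP => [x /eqP Hx [<-]|]. Qed.

Lemma muA_none n m (mu : 'I_n -> option 'I_m) j :
  muA mu j = None -> forall k, mu k <> Some j.
Proof.
rewrite /muA; case: pickP => [//|Hn] _ k Hk.
by move: (Hn k); rewrite Hk eqxx.
Qed.

Lemma stable_nash (R : realType) n m (OP : 'I_n -> option 'I_m -> R)
  (OA : 'I_m -> option 'I_n -> R) (a : profile n m) :
  market_ok OP OA -> stable OP OA (muP OA a) -> nash OP OA a.
Proof.
move=> [_ [OPN [_ [OPb [OAi [OAN [OAp _]]]]]]] [Hm Hst] i b.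
rewrite /util.
set mu := muP OA a in Hm Hst *.
have ge0 : 0 <= OP i (mu i) by case/andP: (OPb i (mu i)).
have devi : deviate a i b i = b by rewrite /deviate eqxx.
case: b devi => [j|] devi; last by rewrite /muP devi OPN.
rewrite /muP devi.
case: eqP => [Hacc|_]; last by rewrite OPN.
have [_ Hd] := @accepted_spec R _ _ _ _ _ _ Hacc.
rewrite leNgt; apply/negP => H; apply: Hst; exists i, j; split=> //.
case E: (muA mu j) => [k|].
  have Mk := @muA_some _ _ _ _ _ E.
  have [ik|ik] := eqVneq k i.
    by move: H; rewrite -ik Mk ltxx.
  have [ak _] := @muP_some R _ _ _ _ _ _ Mk.
  have dk : deviate a i (Some j) k = Some j by rewrite /deviate (negbTE ik).
  rewrite lt_neqAle Hd // andbT; apply/eqP => /OAi [] /eqP; by rewrite (negbTE ik).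
by rewrite OAN OAp.
Qed.

Lemma nash_stable (R : realType) n m (OP : 'I_n -> option 'I_m -> R)
  (OA : 'I_m -> option 'I_n -> R) (a : profile n m) :
  market_ok OP OA -> nash OP OA a -> stable OP OA (muP OA a).
Proof.
move=> [_ [OPN [_ [OPb [OAi [OAN [OAp _]]]]]]] Hn.
have Hm : is_match (muP OA a).
  move=> i i' j /muP_some [_ H1] /muP_some [_ H2].
  by move: H1; rewrite H2 => -[].
split=> //; move=> [i [j [H1 H2]]].
have claim : forall k, a k = Some j -> OA j (Some k) < OA j (Some i).
  move=> k ak.
  have [k0 Hk0] := @accepted_ex R _ _ OA _ _ _ ak.
  have [ak0 Hd] := @accepted_spec R _ _ _ _ _ _ Hk0.
  have Mk0 : muP OA a k0 = Some j by rewrite /muP ak0 Hk0 eqxx.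
  have E : muA (muP OA a) j = Some k0.
    case E: (muA (muP OA a) j) => [k1|].
      by rewrite (Hm _ _ _ (@muA_some _ _ _ _ _ E) Mk0).
    by have := @muA_none _ _ _ _ E _ Mk0.
  rewrite E in H2; exact: le_lt_trans (Hd k ak) H2.
set dev := deviate a i (Some j).
have devi : dev i = Some j by rewrite /dev /deviate eqxx.
have devk : forall k, k != i -> dev k = a k by move=> k ki; rewrite /dev /deviate (negbTE ki).
have Hacc : accepted OA dev j = Some i.
  rewrite /accepted; case: pickP => [x /andP [/eqP dx /forallP Hf]|Hno].
    have [-> //|xi] := eqVneq x i.
    have := claim x; rewrite -devk // dx => /(_ erefl) lt1.
    move: (Hf i); rewrite devi eqxx /= => le1.
    by move: (lt_le_trans lt1 le1); rewrite ltxx.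
  move: (Hno i); rewrite devi eqxx /=; move/negP; case.
  apply/forallP => k; apply/implyP => /eqP dk.
  have [-> //|ki] := eqVneq k i.
  by apply: ltW; apply: claim; rewrite -devk.
have := Hn i (Some j); rewrite /util -/dev /muP devi Hacc eqxx.
by rewrite leNgt H1.
Qed.

Theorem mainTheorem2 (R : realType) (n m : nat)
  (OP : 'I_n -> option 'I_m -> R) (OA : 'I_m -> option 'I_n -> R) :
  market_ok OP OA ->
  (forall a : profile n m, nash OP OA a -> stable OP OA (muP OA a)) /\
  (forall mu : 'I_n -> option 'I_m, stable OP OA mu ->
     exists a : profile n m, nash OP OA a /\ forall i, muP OA a i = mu i) /\
  (forall mustar : 'I_n -> option 'I_m, proposer_optimal OP OA mustar ->
     forall a : profile n m, (forall i, muP OA a i = mustar i) ->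
       nash OP OA a /\
       forall a' : profile n m, nash OP OA a' -> welfare OP OA a' <= welfare OP OA a).
Proof.
move=> Hok; split; first by move=> a; apply: nash_stable.
split.
  move=> mu Hs.
  have E : forall i, muP OA mu i = mu i.
    move=> i; rewrite /muP; case Mi: (mu i) => [j|//].
    suff -> : accepted OA mu j = Some i by rewrite eqxx.
    rewrite /accepted; case: pickP => [x /andP [/eqP Mx _]|Hno].
      by rewrite (proj1 Hs _ _ _ Mx Mi).
    move: (Hno i); rewrite Mi eqxx /=; move/negP; case.
    apply/forallP => k; apply/implyP => /eqP Mk.
    by rewrite (proj1 Hs _ _ _ Mk Mi).
  exists mu; split=> //; apply: stable_nash => //.
  by rewrite (functional_extensionality _ _ E).
move=> mustar [Hs Hopt] a Ea.
have E : muP OA a = mustar by apply: functional_extensionality.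
split; first by apply: stable_nash => //; rewrite E.
move=> a' Hn'; rewrite /welfare; apply: ler_sum => i _.
rewrite /util E; exact: (Hopt _ (@nash_stable R _ _ OP OA a' Hok Hn') i).
Qed.
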